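(* If $(M,+,0)$ is a naturally ordered commutative compact Hausdorff topological monoid, then the partially ordered set $(M,\le)$ is bounded, i.e., it has a greatest element.
   Context: A topological monoid is a monoid with a topology making the operation continuous. For a commutative monoid $(M,+,0)$, define $x\le y$ iff there is $z\in M$ with $x+z=y$; this is a preorder, and $M$ is naturally ordered if it is antisymmetric (so $(M,\le)$ is a partial order with least element $0$). *)

(* Defs.v *)
From HB Require Import structures.
From mathcomp Require Import all_boot all_order all_algebra.
From mathcomp Require Import all_classical all_reals all_analysis.
Set Implicit Arguments. Unset Strict Implicit. Unset Printing Implicit Defensive.

Definition comm_top_monoid (T : topologicalType) (add : T -> T -> T) (zero : T) : Prop :=
  [/\ (forall x y z, add x (add y z) = add (add x y) z),
      (forall x y, add x y = add y x),
      (forall x, add zero x = x) &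
      continuous (fun p : T * T => add p.1 p.2)].

Definition mle (T : Type) (add : T -> T -> T) (x y : T) : Prop :=
  exists z, add x z = y.

Definition naturally_ordered (T : Type) (add : T -> T -> T) : Prop :=
  forall x y, mle add x y -> mle add y x -> x = y.

(* Main.v *)
Require Import Defs.
From mathcomp Require Import all_boot all_order all_algebra.
From mathcomp Require Import all_classical all_reals all_analysis.
Import numFieldNormedType.Exports.
Local Open Scope classical_set_scope.

Theorem proposition3p4 (T : topologicalType) (add : T -> T -> T) (zero : T) :
  comm_top_monoid add zero ->
  naturally_ordered add ->
  compact [set: T] ->
  hausdorff_space T ->
  exists top : T, forall x : T, mle add x top.
Proof.
move=> [addA addC add0 cadd] _ cT hT.
pose f := fun x : T => [set y | exists z, add x z = y].
have fcl : forall x, closed (f x).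
  move=> x; apply: compact_closed => //.
  have -> : f x = (add x) @` setT.
    by apply/seteqP; split => y; [case=> z <-; exists z|case=> z _ <-; exists z].
  apply: continuous_compact => //; apply: continuous_subspaceT => y.
  apply: (continuous_comp (f := fun y => (x, y)) (g := fun p : T * T => add p.1 p.2)).
    by apply: (@cvg_pair _ _ _ _ (nbhs x) (nbhs y)); [exact: cvg_cst|exact: cvg_id].
  exact: cadd.
have finIf : finI setT f.
  move=> D' _; exists (foldr add zero (finmap.enum_fset D')) => i /= iD.
  have : i \in finmap.enum_fset D' by []. clear iD.
  elim: (finmap.enum_fset D') => // a l IH; rewrite inE /= => /orP [/eqP ->|/IH [z <-]].
    by exists (foldr add zero l).
  by exists (add a z) => /=; rewrite addA (addC i a) -addA.
have := cT _ (finI_filter finIf).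
case=> [|p [_ cp]]; first by exists setT => //; exists finmap.fset0 => //; rewrite predeqE.
exists p => x.
apply: (fcl x) => B nB.
apply: cp nB; exists (f x) => //; exact: finI_from1.
Qed.
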